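(* Let $X$ be a random variable taking values in a finite set $\mathcal{X}$ according to a PMF $P$, and let $f\colon\mathcal{X}\to\{1,\dots,|\mathcal{X}|\}$ be a bijection. Then $$\mathbb{E}[\log f(X)]\ \ge\ H(X)-\log\big(\ln|\mathcal{X}|+3/2\big).$$
   Context: $\log$ is base 2, $\ln$ is the natural logarithm, and $H(X)$ is the Shannon entropy (base 2) of $X$. *)

(* Defs.v *)
From mathcomp Require Import all_boot all_order all_algebra.
From mathcomp Require Import all_classical all_reals all_analysis.
Set Implicit Arguments. Unset Strict Implicit. Unset Printing Implicit Defensive.
Import Order.TTheory GRing.Theory Num.Theory.
Local Open Scope ring_scope.

Definition log2 {R : realType} (x : R) : R := ln x / ln 2.

Definition is_pmf {R : realType} {T : finType} (P : T -> R) : Prop :=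
  (forall x, 0 <= P x) /\ \sum_(x : T) P x = 1.

(* Shannon entropy (base 2), with the convention 0 log 0 = 0 *)
Definition entropy {R : realType} {T : finType} (P : T -> R) : R :=
  - \sum_(x : T | P x != 0) P x * log2 (P x).

Definition expect {R : realType} {T : finType} (P : T -> R) (g : T -> R) : R :=
  \sum_(x : T) P x * g x.

(* Main.v *)
Require Import Defs.
From mathcomp Require Import all_boot all_order all_algebra.
From mathcomp Require Import all_classical all_reals all_analysis.
From mathcomp Require Import ring lra.
Import Order.TTheory GRing.Theory Num.Theory.
Local Open Scope ring_scope.

Lemma ln_le_sub1 (R : realType) (x : R) : 0 < x -> ln x <= x - 1.
Proof.
move=> x0; have e : 1 + (x - 1) = x by rewrite addrC subrK.
have := @le_ln1Dx R (x - 1); rewrite e; apply; lra.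
Qed.

Lemma harm (R : realType) (n : nat) :
  \sum_(i < n.+1) 1 / (i.+1%:R : R) <= 1 + ln (n.+1%:R).
Proof.
elim: n => [|n IH]; first by rewrite big_ord1 /= ln1 divr1 addr0.
rewrite big_ord_recr /=.
have h : 1 / (n.+2%:R : R) <= ln (n.+2%:R) - ln (n.+1%:R).
  have p1 : (0 : R) < n.+1%:R by rewrite ltr0n.
  have p2 : (0 : R) < n.+2%:R by rewrite ltr0n.
  have := @ln_le_sub1 R (n.+1%:R / n.+2%:R) (divr_gt0 p1 p2).
  rewrite ln_div ?posrE // => H.
  have e : (n.+1%:R / n.+2%:R : R) - 1 = - (1 / n.+2%:R).
    field; apply: lt0r_neq0; have := ler0n R n; lra.
  by rewrite e in H; rewrite -lerN2 opprB.
apply: le_trans (lerD IH h) _; lra.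
Qed.

Lemma key (R : realType) (p k L : R) : 0 < p -> 0 < k -> 0 < L ->
  p * (- ln p - ln k) - p * ln L <= 1 / (k * L) - p.
Proof.
move=> p0 k0 L0.
have y0 : 0 < 1 / (p * k * L) by rewrite divr_gt0 // !mulr_gt0.
have := @ln_le_sub1 R _ y0.
rewrite div1r lnV ?posrE ?mulr_gt0 // !lnM ?posrE ?mulr_gt0 // => H.
have := ler_wpM2l (ltW p0) H.
have -> : p * ((p * k * L)^-1 - 1) = 1 / (k * L) - p.
  by field; rewrite !lt0r_neq0.
move=> H2; apply: le_trans H2; rewrite le_eqVlt; apply/orP; left; apply/eqP; ring.
Qed.

Theorem lemma4 (R : realType) (T : finType) (P : T -> R)
  (f : T -> 'I_#|T|) :
  is_pmf P -> bijective f ->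
  expect P (fun x => log2 ((nat_of_ord (f x)).+1%:R)) >=
  entropy P - log2 (ln (#|T|%:R) + 3 / 2).
Proof.
move=> [P0 P1] fbij.
have [x0 _ | hT] := pickP T; last first.
  by move: P1; rewrite big_pred0 // => /esym/eqP; rewrite oner_eq0.
have nT : (0 < #|T|)%N by apply/card_gt0P; exists x0.
set L := ln (#|T|%:R : R) + 3 / 2.
have lnn0 : 0 <= ln (#|T|%:R : R) by apply: ln_ge0; rewrite ler1n.
have L0 : 0 < L by rewrite /L; lra.
have hsum : \sum_x 1 / ((f x).+1%:R : R) <= L.
  have e : \sum_(i < #|T|) 1 / (i.+1%:R : R) = \sum_x 1 / ((f x).+1%:R : R).
    exact: (reindex f (onW_bij _ fbij)).
  rewrite -e.
  have := harm R (#|T|.-1); rewrite prednK // /L => H.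
  apply: le_trans H _; lra.
set k := fun x => ((f x).+1%:R : R).
have k0 : forall x, 0 < k x by move=> x; rewrite ltr0n.
have S1 : \sum_(x | P x != 0) (P x * (- ln (P x) - ln (k x)) - P x * ln L)
    <= \sum_(x | P x != 0) (1 / (k x * L) - P x).
  apply: ler_sum => x hx; apply: key => //.
  by rewrite lt0r hx P0.
have Pnz : \sum_(x | P x != 0) P x = 1.
  rewrite -P1 [RHS](bigID (fun x => P x != 0)) /= [X in _ = _ + X]big1 ?addr0 //.
  by move=> x /negPn/eqP.
have S2 : \sum_(x | P x != 0) 1 / (k x * L) <= 1.
  apply: (@le_trans _ _ (\sum_x 1 / (k x * L))).
    rewrite [X in _ <= X](bigID (fun x => P x != 0)) /= lerDl sumr_ge0 // => x _.
    by rewrite divr_ge0 // ltW // mulr_gt0.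
  have -> : \sum_x 1 / (k x * L) = (\sum_x 1 / k x) / L.
    rewrite mulr_suml; apply: eq_bigr => x _; field.
    by rewrite !lt0r_neq0.
  by rewrite ler_pdivrMr // mul1r.
have eA : \sum_x P x * ln (k x) = \sum_(x | P x != 0) P x * ln (k x).
  rewrite (bigID (fun x => P x != 0)) /= [X in _ + X = _]big1 ?addr0 //.
  by move=> x /negPn/eqP ->; rewrite mul0r.
move: S1; rewrite !sumrB -mulr_suml Pnz mul1r => S1.
have eS : \sum_(x | P x != 0) P x * (- ln (P x) - ln (k x)) =
   - \sum_(x | P x != 0) P x * ln (P x) - \sum_(x | P x != 0) P x * ln (k x).
  rewrite -sumrN -sumrB; apply: eq_bigr => x _; ring.
rewrite eS -eA in S1.
have hmain : - \sum_(x | P x != 0) P x * ln (P x) - ln L <= \sum_x P x * ln (k x).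
  lra.
have c0 : 0 < (ln (2 : R))^-1 by rewrite invr_gt0 ln_gt0 // ltr1n.
rewrite /expect /entropy /log2.
have -> : \sum_x P x * (ln ((f x).+1%:R) / ln (2 : R)) = (\sum_x P x * ln (k x)) * (ln 2)^-1.
  by rewrite mulr_suml; apply: eq_bigr => x _; rewrite mulrA.
have -> : \sum_(x | P x != 0) P x * (ln (P x) / ln (2 : R)) = (\sum_(x | P x != 0) P x * ln (P x)) * (ln 2)^-1.
  by rewrite mulr_suml; apply: eq_bigr => x _; rewrite mulrA.
have := ler_wpM2r (ltW c0) hmain.
set A := \sum_x _. set B := \sum_(x | _) _.
move=> H; apply: le_trans H; rewrite le_eqVlt; apply/orP; left; apply/eqP.
rewrite -/L; ring.
Qed.
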